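(* A real $4\times4$ array $(c_{i,j})_{0\le i,j\le3}$ satisfies the fourteen equations (E0), (R1)–(R9), (O1)–(O4) if and only if there exist real numbers $p=c_{3,2}$, $q=c_{3,3}$, a choice $\mu\in\{\mu_1,\mu_2\}$, a sign $\sigma\in\{+1,-1\}$ and a type $T\in\{A,B\}$ such that the corresponding discriminant is nonnegative and the entries are given as follows. Type A: with $\Delta=\Delta_1$ if $\mu=\mu_1$ and $\Delta=\Delta_2$ if $\mu=\mu_2$ (and $\Delta\ge0$), $c_{2,3}=\tfrac14+2\mu-\tfrac12(p+q)+\tfrac{\sigma}{8}\sqrt{\Delta}$, $c_{2,2}=\tfrac34+4\mu-p-q-c_{2,3}$, $c_{3,1}=\mu-q$, $c_{1,3}=c_{3,1}$. Type B: with $\Delta_3\ge0$, $c_{2,3}=-\tfrac12(p+q)+\tfrac{\sigma}{8}\sqrt{\Delta_3}$, $c_{2,2}=\tfrac14-p-q-c_{2,3}$, $c_{3,1}=\mu-q$, $c_{1,3}=\tfrac12-2q-c_{3,1}$. In both types the remaining ten entries are $c_{0,0}=-c_{3,1}-2c_{3,3}-c_{1,3}+c_{2,2}$, $c_{0,1}=-c_{3,1}-2c_{3,3}+\tfrac12+c_{2,3}-c_{1,3}$, $c_{0,2}=c_{1,3}+c_{3,3}+\tfrac12-c_{2,2}$, $c_{0,3}=c_{3,3}-c_{2,3}+c_{1,3}$, $c_{1,0}=-c_{3,1}-2c_{3,3}+c_{3,2}-c_{1,3}+\tfrac12$, $c_{1,1}=1-c_{1,3}-c_{3,1}-c_{3,3}$,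 $c_{1,2}=-c_{3,2}+c_{1,3}+c_{3,3}+\tfrac12$, $c_{2,0}=c_{3,1}+c_{3,3}-c_{2,2}+\tfrac12$, $c_{2,1}=c_{3,1}+c_{3,3}+\tfrac12-c_{2,3}$, $c_{3,0}=c_{3,1}+c_{3,3}-c_{3,2}$.
   Context: $\mu_1=\frac{1+\sqrt3}{4}$, $\mu_2=\frac{1-\sqrt3}{4}$, and with $p=c_{3,2}$, $q=c_{3,3}$: $\Delta_1=-34-20\sqrt3+32\sqrt3\,q+32\sqrt3\,p-48q^2+32q-32pq+48p-48p^2$; $\Delta_2=-34+20\sqrt3-32\sqrt3\,q-32\sqrt3\,p-48q^2+32q-32pq+48p-48p^2$; $\Delta_3=-48p^2-32pq-48q^2+2-16q$. (E0): $\sum_{i=0}^3\sum_{j=0}^3 c_{i,j}=4$. Regularity equations: (R1) $c_{0,1}+c_{0,3}+c_{2,1}+c_{2,3}=c_{0,0}+c_{0,2}+c_{2,0}+c_{2,2}$; (R2) $c_{1,1}+c_{1,3}+c_{3,1}+c_{3,3}=c_{0,0}+c_{0,2}+c_{2,0}+c_{2,2}$; (R3) $c_{1,0}+c_{1,2}+c_{3,0}+c_{3,2}=c_{0,0}+c_{0,2}+c_{2,0}+c_{2,2}$; (R4) $c_{2,1}+c_{2,3}=c_{2,0}+c_{2,2}$; (R5) $c_{1,1}+c_{1,3}+3c_{3,1}+3c_{3,3}=2c_{2,0}+2c_{2,2}$; (R6) $c_{1,0}+c_{1,2}+3c_{3,0}+3c_{3,2}=2c_{2,0}+2c_{2,2}$;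 (R7) $c_{0,1}+c_{2,1}+3c_{0,3}+3c_{2,3}=2c_{0,2}+2c_{2,2}$; (R8) $c_{1,1}+c_{3,1}+3c_{1,3}+3c_{3,3}=2c_{0,2}+2c_{2,2}$; (R9) $c_{1,2}+c_{3,2}=c_{0,2}+c_{2,2}$. Orthogonality equations: (O1) $\sum_{i=0}^3\sum_{j=0}^3 c_{i,j}^2=4$; (O2) $c_{3,3}c_{1,1}+c_{3,2}c_{1,0}+c_{2,3}c_{0,1}+c_{2,2}c_{0,0}=0$; (O3) $c_{3,3}c_{1,3}+c_{3,2}c_{1,2}+c_{2,3}c_{0,3}+c_{2,2}c_{0,2}+c_{3,1}c_{1,1}+c_{3,0}c_{1,0}+c_{2,1}c_{0,1}+c_{2,0}c_{0,0}=0$; (O4) $c_{3,3}c_{3,1}+c_{3,2}c_{3,0}+c_{2,3}c_{2,1}+c_{2,2}c_{2,0}+c_{1,3}c_{1,1}+c_{1,2}c_{1,0}+c_{0,3}c_{0,1}+c_{0,2}c_{0,0}=0$. *)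

(* Defs.v *)
(* Stdlib reals. A real 4x4 array (c_{i,j})_{0<=i,j<=3} is modelled as
   c : nat -> nat -> R; only the entries with 0 <= i,j <= 3 are ever used. *)
From Stdlib Require Import Reals.
Open Scope R_scope.

Definition mu1 : R := (1 + sqrt 3) / 4.
Definition mu2 : R := (1 - sqrt 3) / 4.

Definition Delta1 (p q : R) : R :=
  -34 - 20 * sqrt 3 + 32 * sqrt 3 * q + 32 * sqrt 3 * p - 48 * q^2 + 32 * q
  - 32 * p * q + 48 * p - 48 * p^2.
Definition Delta2 (p q : R) : R :=
  -34 + 20 * sqrt 3 - 32 * sqrt 3 * q - 32 * sqrt 3 * p - 48 * q^2 + 32 * q
  - 32 * p * q + 48 * p - 48 * p^2.
Definition Delta3 (p q : R) : R :=
  -48 * p^2 - 32 * p * q - 48 * q^2 + 2 - 16 * q.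

Definition sum44 (f : nat -> nat -> R) : R :=
  sum_f_R0 (fun i => sum_f_R0 (fun j => f i j) 3) 3.

Definition system (c : nat -> nat -> R) : Prop :=
  (* E0 *) sum44 c = 4 /\
  (* R1 *) c 0%nat 1%nat + c 0%nat 3%nat + c 2%nat 1%nat + c 2%nat 3%nat
           = c 0%nat 0%nat + c 0%nat 2%nat + c 2%nat 0%nat + c 2%nat 2%nat /\
  (* R2 *) c 1%nat 1%nat + c 1%nat 3%nat + c 3%nat 1%nat + c 3%nat 3%nat
           = c 0%nat 0%nat + c 0%nat 2%nat + c 2%nat 0%nat + c 2%nat 2%nat /\
  (* R3 *) c 1%nat 0%nat + c 1%nat 2%nat + c 3%nat 0%nat + c 3%nat 2%nat
           = c 0%nat 0%nat + c 0%nat 2%nat + c 2%nat 0%nat + c 2%nat 2%nat /\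
  (* R4 *) c 2%nat 1%nat + c 2%nat 3%nat = c 2%nat 0%nat + c 2%nat 2%nat /\
  (* R5 *) c 1%nat 1%nat + c 1%nat 3%nat + 3 * c 3%nat 1%nat + 3 * c 3%nat 3%nat
           = 2 * c 2%nat 0%nat + 2 * c 2%nat 2%nat /\
  (* R6 *) c 1%nat 0%nat + c 1%nat 2%nat + 3 * c 3%nat 0%nat + 3 * c 3%nat 2%nat
           = 2 * c 2%nat 0%nat + 2 * c 2%nat 2%nat /\
  (* R7 *) c 0%nat 1%nat + c 2%nat 1%nat + 3 * c 0%nat 3%nat + 3 * c 2%nat 3%nat
           = 2 * c 0%nat 2%nat + 2 * c 2%nat 2%nat /\
  (* R8 *) c 1%nat 1%nat + c 3%nat 1%nat + 3 * c 1%nat 3%nat + 3 * c 3%nat 3%nat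
           = 2 * c 0%nat 2%nat + 2 * c 2%nat 2%nat /\
  (* R9 *) c 1%nat 2%nat + c 3%nat 2%nat = c 0%nat 2%nat + c 2%nat 2%nat /\
  (* O1 *) sum44 (fun i j => (c i j)^2) = 4 /\
  (* O2 *) c 3%nat 3%nat * c 1%nat 1%nat + c 3%nat 2%nat * c 1%nat 0%nat
           + c 2%nat 3%nat * c 0%nat 1%nat + c 2%nat 2%nat * c 0%nat 0%nat = 0 /\
  (* O3 *) c 3%nat 3%nat * c 1%nat 3%nat + c 3%nat 2%nat * c 1%nat 2%nat
           + c 2%nat 3%nat * c 0%nat 3%nat + c 2%nat 2%nat * c 0%nat 2%nat
           + c 3%nat 1%nat * c 1%nat 1%nat + c 3%nat 0%nat * c 1%nat 0%nat
           + c 2%nat 1%nat * c 0%nat 1%nat + c 2%nat 0%nat * c 0%nat 0%nat = 0 /\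
  (* O4 *) c 3%nat 3%nat * c 3%nat 1%nat + c 3%nat 2%nat * c 3%nat 0%nat
           + c 2%nat 3%nat * c 2%nat 1%nat + c 2%nat 2%nat * c 2%nat 0%nat
           + c 1%nat 3%nat * c 1%nat 1%nat + c 1%nat 2%nat * c 1%nat 0%nat
           + c 0%nat 3%nat * c 0%nat 1%nat + c 0%nat 2%nat * c 0%nat 0%nat = 0.

Definition remaining (c : nat -> nat -> R) : Prop :=
  c 0%nat 0%nat = - c 3%nat 1%nat - 2 * c 3%nat 3%nat - c 1%nat 3%nat + c 2%nat 2%nat /\
  c 0%nat 1%nat = - c 3%nat 1%nat - 2 * c 3%nat 3%nat + 1/2 + c 2%nat 3%nat - c 1%nat 3%nat /\
  c 0%nat 2%nat = c 1%nat 3%nat + c 3%nat 3%nat + 1/2 - c 2%nat 2%nat /\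
  c 0%nat 3%nat = c 3%nat 3%nat - c 2%nat 3%nat + c 1%nat 3%nat /\
  c 1%nat 0%nat = - c 3%nat 1%nat - 2 * c 3%nat 3%nat + c 3%nat 2%nat - c 1%nat 3%nat + 1/2 /\
  c 1%nat 1%nat = 1 - c 1%nat 3%nat - c 3%nat 1%nat - c 3%nat 3%nat /\
  c 1%nat 2%nat = - c 3%nat 2%nat + c 1%nat 3%nat + c 3%nat 3%nat + 1/2 /\
  c 2%nat 0%nat = c 3%nat 1%nat + c 3%nat 3%nat - c 2%nat 2%nat + 1/2 /\
  c 2%nat 1%nat = c 3%nat 1%nat + c 3%nat 3%nat + 1/2 - c 2%nat 3%nat /\
  c 3%nat 0%nat = c 3%nat 1%nat + c 3%nat 3%nat - c 3%nat 2%nat.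

Definition typeA (c : nat -> nat -> R) (p q mu sigma D : R) : Prop :=
  0 <= D /\
  c 2%nat 3%nat = 1/4 + 2 * mu - 1/2 * (p + q) + sigma / 8 * sqrt D /\
  c 2%nat 2%nat = 3/4 + 4 * mu - p - q - c 2%nat 3%nat /\
  c 3%nat 1%nat = mu - q /\
  c 1%nat 3%nat = c 3%nat 1%nat.

Definition typeB (c : nat -> nat -> R) (p q mu sigma : R) : Prop :=
  0 <= Delta3 p q /\
  c 2%nat 3%nat = - 1/2 * (p + q) + sigma / 8 * sqrt (Delta3 p q) /\
  c 2%nat 2%nat = 1/4 - p - q - c 2%nat 3%nat /\
  c 3%nat 1%nat = mu - q /\
  c 1%nat 3%nat = 1/2 - 2 * q - c 3%nat 1%nat.

(* Main.v *)
Require Import Defs.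
From Stdlib Require Import Reals Lra Psatz.
Open Scope R_scope.

Definition P1 (a q d e f p : R) : R :=
  (8) * a^2 + (20) * a * q + (8) * a * d + (-4) * a * e + (-4) * a * f + (-4) * a * p + (-2) * a + (20) * q^2 + (20) * q * d + (-8) * q * e + (-8) * q * f + (-8) * q * p + (-2) * q + (8) * d^2 + (-4) * d * e + (-4) * d * f + (-4) * d * p + (-2) * d + (4) * e^2 + (-2) * e + (4) * f^2 + (4) * p^2 + (-3/2).

Definition P2 (a q d e f p : R) : R :=
  (-1) * a * q + (-1) * a * e + (-1) * a * f + (-1) * a * p + (-1) * q^2 + (-1) * q * d + (-2) * q * e + (-2) * q * f + (-2) * q * p + (1) * q + (-1) * d * e + (-1) * d * f + (-1) * d * p + (1) * e^2 + (1) * f^2 + (1/2) * f + (1) * p^2 + (1/2) * p.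

Definition P3 (a q d e f p : R) : R :=
  (-4) * a^2 + (-10) * a * q + (-4) * a * d + (2) * a * e + (2) * a * f + (2) * a * p + (1) * a + (-6) * q^2 + (-2) * q * d + (4) * q * e + (4) * q * f + (4) * q * p + (-1) * q + (2) * d * e + (2) * d * f + (2) * d * p + (-1) * d + (-2) * e^2 + (1) * e + (-2) * f^2 + (-2) * p^2 + (1/4).

Definition P4 (a q d e f p : R) : R :=
  (-2) * a * q + (-4) * a * d + (2) * a * e + (2) * a * f + (2) * a * p + (-1) * a + (-6) * q^2 + (-10) * q * d + (4) * q * e + (4) * q * f + (4) * q * p + (-1) * q + (-4) * d^2 + (2) * d * e + (2) * d * f + (2) * d * p + (1) * d + (-2) * e^2 + (1) * e + (-2) * f^2 + (-2) * p^2 + (1/4).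

Definition Dm (m p q : R) : R :=
  -34 - 20 * (4*m-1) + 32 * (4*m-1) * q + 32 * (4*m-1) * p - 48 * q^2 + 32 * q
  - 32 * p * q + 48 * p - 48 * p^2.

Lemma sqrt3_sq : sqrt 3 * sqrt 3 = 3.
Proof. apply sqrt_sqrt; lra. Qed.

Lemma D1_eq p q : Delta1 p q = Dm mu1 p q.
Proof. unfold Delta1, Dm, mu1; field. Qed.
Lemma D2_eq p q : Delta2 p q = Dm mu2 p q.
Proof. unfold Delta2, Dm, mu2; field. Qed.

Lemma mu1_root : 8*mu1^2 - 4*mu1 - 1 = 0.
Proof.
  replace (8*mu1^2 - 4*mu1 - 1) with ((sqrt 3 * sqrt 3 - 3)/2) by (unfold mu1; field).
  rewrite sqrt3_sq; field.
Qed.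
Lemma mu2_root : 8*mu2^2 - 4*mu2 - 1 = 0.
Proof.
  replace (8*mu2^2 - 4*mu2 - 1) with ((sqrt 3 * sqrt 3 - 3)/2) by (unfold mu2; field).
  rewrite sqrt3_sq; field.
Qed.

Lemma root_cases s : 8*s^2 - 4*s - 1 = 0 -> s = mu1 \/ s = mu2.
Proof.
  intro H.
  assert (E: (s - mu1)*(s - mu2) = s^2 - s/2 + (1 - sqrt 3 * sqrt 3)/16)
    by (unfold mu1, mu2; field).
  rewrite sqrt3_sq in E.
  assert (E2 : (s - mu1)*(s - mu2) = 0) by lra.
  apply Rmult_integral in E2; destruct E2; [left|right]; lra.
Qed.

Lemma root_other m : 8*m^2 - 4*m - 1 = 0 -> 8*(1/2-m)^2 - 4*(1/2-m) - 1 = 0.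
Proof. intro H; replace (8*(1/2-m)^2 - 4*(1/2-m) - 1) with (8*m^2 - 4*m - 1) by field; exact H. Qed.

Lemma sigma_pick x D : (8*x)*(8*x) = D ->
  0 <= D /\ exists sigma, (sigma = 1 \/ sigma = -1) /\ x = sigma/8 * sqrt D.
Proof.
  intro H. split. { rewrite <- H; nra. }
  destruct (Rle_lt_dec 0 x) as [Hx|Hx].
  - exists 1; split; [left; reflexivity|].
    rewrite <- H, sqrt_square by lra; field.
  - exists (-1); split; [right; reflexivity|].
    replace (8*x*(8*x)) with ((-(8*x))*(-(8*x))) in H by ring.
    rewrite <- H, sqrt_square by lra; field.
Qed.

Lemma combX a q d e f p : P1 a q d e f p + 2 * P3 a q d e f p = 8*(q+d)^2 - 4*(q+d) - 1.
Proof. unfold P1, P3; field. Qed.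
Lemma combZ a q d e f p : P3 a q d e f p - P4 a q d e f p = -2*(a-d)*(2*a+2*d+4*q-1).
Proof. unfold P3, P4; field. Qed.
Lemma combY a q d e f p : P3 a q d e f p + 2 * P2 a q d e f p =
  -4*a^2 -12*a*q -4*a*d + a -8*q^2 -4*q*d + q - d + e + f + p + 1/4.
Proof. unfold P2, P3; field. Qed.
Lemma idA m q f p : 32 * P2 (m-q) q (m-q) (3/4 + 4*m - p - q - f) f p =
  (8*(f - (1/4 + 2*m - 1/2*(p+q))))*(8*(f - (1/4 + 2*m - 1/2*(p+q)))) - Dm m p q.
Proof. unfold P2, Dm; field. Qed.
Lemma idB m q f p : 32 * P2 (m-q) q (1/2 - 2*q - (m-q)) (1/4 - p - q - f) f p =
  (8*(f - (- 1/2*(p+q))))*(8*(f - (- 1/2*(p+q)))) - Delta3 p q.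
Proof. unfold P2, Delta3; field. Qed.

Definition TA (a d e f p q mu sigma D : R) : Prop :=
  0 <= D /\
  f = 1/4 + 2 * mu - 1/2 * (p + q) + sigma / 8 * sqrt D /\
  e = 3/4 + 4 * mu - p - q - f /\
  a = mu - q /\
  d = a.

Definition TB (a d e f p q mu sigma : R) : Prop :=
  0 <= Delta3 p q /\
  f = - 1/2 * (p + q) + sigma / 8 * sqrt (Delta3 p q) /\
  e = 1/4 - p - q - f /\
  a = mu - q /\
  d = 1/2 - 2 * q - a.

Definition Yexp a q d e f p : R :=
  -4*a^2 -12*a*q -4*a*d + a -8*q^2 -4*q*d + q - d + e + f + p + 1/4.

Lemma caseA a q d e f p m : 8*m^2-4*m-1=0 -> a = m-q -> d = m-q ->
  P2 a q d e f p = 0 -> Yexp a q d e f p = 0 ->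
  exists sigma, (sigma = 1 \/ sigma = -1) /\ TA a d e f p q m sigma (Dm m p q).
Proof.
  intros Hm Ha Hd H2 HY. unfold Yexp in HY.
  assert (He : e = 3/4 + 4 * m - p - q - f) by (subst a d; lra).
  subst a d e.
  pose proof (idA m q f p) as I. rewrite H2 in I.
  destruct (sigma_pick (f - (1/4 + 2*m - 1/2*(p+q))) (Dm m p q)) as [HD [s [Hs Hf]]]; [lra|].
  exists s; split; [exact Hs|]. unfold TA; repeat split; try lra.
Qed.

Lemma caseB a q d e f p m : a = m-q -> d = 1/2 - 2*q - a ->
  P2 a q d e f p = 0 -> Yexp a q d e f p = 0 ->
  exists sigma, (sigma = 1 \/ sigma = -1) /\ TB a d e f p q m sigma.
Proof.
  intros Ha Hd H2 HY. unfold Yexp in HY. subst d.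
  assert (He : e = 1/4 - p - q - f) by (subst a; lra).
  subst a e.
  pose proof (idB m q f p) as I. rewrite H2 in I.
  destruct (sigma_pick (f - (- 1/2*(p+q))) (Delta3 p q)) as [HD [s [Hs Hf]]]; [lra|].
  exists s; split; [exact Hs|]. unfold TB; repeat split; try lra.
Qed.

Lemma fwd_core a q d e f p :
  P1 a q d e f p = 0 -> P2 a q d e f p = 0 -> P3 a q d e f p = 0 -> P4 a q d e f p = 0 ->
  exists mu sigma, (mu = mu1 \/ mu = mu2) /\ (sigma = 1 \/ sigma = -1) /\
  (((mu = mu1 /\ TA a d e f p q mu sigma (Delta1 p q)) \/
    (mu = mu2 /\ TA a d e f p q mu sigma (Delta2 p q))) \/ TB a d e f p q mu sigma).
Proof.
  intros H1 H2 H3 H4.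
  pose proof (combX a q d e f p) as X. pose proof (combZ a q d e f p) as Z.
  pose proof (combY a q d e f p) as Y.
  assert (HY : Yexp a q d e f p = 0) by (unfold Yexp; lra).
  assert (Hs: 8*(q+d)^2-4*(q+d)-1=0) by lra.
  assert (Hz: (a-d)*(2*a+2*d+4*q-1)=0) by lra.
  replace ((a-d)*(2*a+2*d+4*q-1)) with (-2*((a-d)*(2*a+2*d+4*q-1))/(-2)) in Hz by field.
  assert (Hz' : (a-d)*(2*a+2*d+4*q-1)=0) by lra. clear Hz.
  apply Rmult_integral in Hz'; destruct Hz' as [Hz|Hz].
  - destruct (root_cases _ Hs) as [Hm|Hm].
    + destruct (caseA a q d e f p mu1 mu1_root) as [s [Hsg HT]]; try lra.
      exists mu1, s; repeat split; auto. left; left; split; auto. rewrite D1_eq; exact HT.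
    + destruct (caseA a q d e f p mu2 mu2_root) as [s [Hsg HT]]; try lra.
      exists mu2, s; repeat split; auto. left; right; split; auto. rewrite D2_eq; exact HT.
  - assert (Hs2 : 8*(a+q)^2-4*(a+q)-1=0).
    { replace (a+q) with (1/2 - (q+d)) by lra. apply root_other; exact Hs. }
    destruct (caseB a q d e f p (a+q)) as [s [Hsg HT]]; try lra.
    exists (a+q), s; repeat split; auto. apply root_cases; exact Hs2.
Qed.

Lemma sig_sq s : (s = 1 \/ s = -1) -> s * s = 1.
Proof. intros [->| ->]; ring. Qed.

Lemma bwd_core a q d e f p mu sigma :
  (mu = mu1 \/ mu = mu2) -> (sigma = 1 \/ sigma = -1) ->
  (((mu = mu1 /\ TA a d e f p q mu sigma (Delta1 p q)) \/
    (mu = mu2 /\ TA a d e f p q mu sigma (Delta2 p q))) \/ TB a d e f p q mu sigma) ->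
  P1 a q d e f p = 0 /\ P2 a q d e f p = 0 /\ P3 a q d e f p = 0 /\ P4 a q d e f p = 0.
Proof.
  intros Hmu Hsg HT.
  assert (Hm : 8*mu^2-4*mu-1=0) by (destruct Hmu as [-> | ->]; [apply mu1_root|apply mu2_root]).
  pose proof (sig_sq _ Hsg) as Hss.
  pose proof (combX a q d e f p) as X. pose proof (combZ a q d e f p) as Z.
  pose proof (combY a q d e f p) as Y.
  assert (Hgen : P2 a q d e f p = 0 -> P1 a q d e f p + 2 * P3 a q d e f p = 0 ->
     P3 a q d e f p - P4 a q d e f p = 0 -> P3 a q d e f p + 2 * P2 a q d e f p = 0 ->
     P1 a q d e f p = 0 /\ P2 a q d e f p = 0 /\ P3 a q d e f p = 0 /\ P4 a q d e f p = 0)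
    by (intros; repeat split; lra).
  destruct HT as [HA|HB].
  - assert (HA' : exists D, D = Dm mu p q /\ TA a d e f p q mu sigma D).
    { destruct HA as [[-> HA]|[-> HA]]; eexists; split; [|exact HA| |exact HA].
      apply D1_eq. apply D2_eq. }
    clear HA. destruct HA' as [D [HDe (HD & Hf & He & Ha & Hd)]].
    subst d. subst a. subst e.
    pose proof (idA mu q f p) as I.
    assert (Hsq : sqrt D * sqrt D = D) by (apply sqrt_sqrt; exact HD).
    apply Hgen.
    + assert (R0: (8*(f - (1/4 + 2*mu - 1/2*(p+q))))*(8*(f - (1/4 + 2*mu - 1/2*(p+q)))) - Dm mu p q = 0).
      { rewrite Hf, <- HDe.
        replace (8 * (1 / 4 + 2 * mu - 1 / 2 * (p + q) + sigma / 8 * sqrt D - (1 / 4 + 2 * mu - 1 / 2 * (p + q))) *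
          (8 * (1 / 4 + 2 * mu - 1 / 2 * (p + q) + sigma / 8 * sqrt D - (1 / 4 + 2 * mu - 1 / 2 * (p + q)))) - D)
          with ((sigma*sigma)*(sqrt D * sqrt D) - D) by field.
        rewrite Hss, Hsq; ring. }
      lra.
    + rewrite X. replace (q + (mu - q)) with mu by ring. exact Hm.
    + rewrite Z. ring.
    + rewrite Y. lra.
  - destruct HB as (HD & Hf & He & Ha & Hd).
    assert (Hsq : sqrt (Delta3 p q) * sqrt (Delta3 p q) = Delta3 p q) by (apply sqrt_sqrt; exact HD).
    subst d. subst a. subst e.
    pose proof (idB mu q f p) as I.
    apply Hgen.
    + assert (R0: (8*(f - (- 1/2*(p+q))))*(8*(f - (- 1/2*(p+q)))) - Delta3 p q = 0).
      { rewrite Hf.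
        replace (8 * (- 1 / 2 * (p + q) + sigma / 8 * sqrt (Delta3 p q) - - 1 / 2 * (p + q)) *
          (8 * (- 1 / 2 * (p + q) + sigma / 8 * sqrt (Delta3 p q) - - 1 / 2 * (p + q))) - Delta3 p q)
          with ((sigma*sigma)*(sqrt (Delta3 p q) * sqrt (Delta3 p q)) - Delta3 p q) by field.
        rewrite Hss, Hsq; ring. }
      lra.
    + rewrite X. replace (q + (1 / 2 - 2 * q - (mu - q))) with (1/2 - mu) by field.
      apply root_other; exact Hm.
    + rewrite Z. field.
    + rewrite Y. lra.
Qed.

Theorem mainTheorem9 (c : nat -> nat -> R) :
  system c <->
  exists p q mu sigma : R,
    p = c 3%nat 2%nat /\ q = c 3%nat 3%nat /\
    (mu = mu1 \/ mu = mu2) /\ (sigma = 1 \/ sigma = -1) /\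
    ( (* type A, with Delta = Delta1 if mu = mu1 and Delta2 if mu = mu2 *)
      ((mu = mu1 /\ typeA c p q mu sigma (Delta1 p q)) \/
       (mu = mu2 /\ typeA c p q mu sigma (Delta2 p q)))
      \/ (* type B *)
      typeB c p q mu sigma ) /\
    remaining c.
Proof.
  split.
  - intros (E0 & R1 & R2 & R3 & R4 & R5 & R6 & R7 & R8 & R9 & O1 & O2 & O3 & O4).
    unfold sum44 in E0, O1; simpl in E0, O1.
    assert (Rem : remaining c) by (unfold remaining; repeat split; lra).
    pose proof Rem as Rem'.
    destruct Rem' as (h00&h01&h02&h03&h10&h11&h12&h20&h21&h30).
    rewrite ?h00, ?h01, ?h02, ?h03, ?h10, ?h11, ?h12, ?h20, ?h21, ?h30 in O1; rewrite ?h00, ?h01, ?h02, ?h03, ?h10, ?h11, ?h12, ?h20, ?h21, ?h30 in O2; rewrite ?h00, ?h01, ?h02, ?h03, ?h10, ?h11, ?h12, ?h20, ?h21, ?h30 in O3; rewrite ?h00, ?h01, ?h02, ?h03, ?h10, ?h11, ?h12, ?h20, ?h21, ?h30 in O4.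
    assert (H1 : P1 (c 3%nat 1%nat) (c 3%nat 3%nat) (c 1%nat 3%nat) (c 2%nat 2%nat) (c 2%nat 3%nat) (c 3%nat 2%nat) = 0)
      by (rewrite <- (Rminus_diag_eq _ _ O1); unfold P1; field).
    assert (H2 : P2 (c 3%nat 1%nat) (c 3%nat 3%nat) (c 1%nat 3%nat) (c 2%nat 2%nat) (c 2%nat 3%nat) (c 3%nat 2%nat) = 0)
      by (rewrite <- (Rminus_diag_eq _ _ O2); unfold P2; field).
    assert (H3 : P3 (c 3%nat 1%nat) (c 3%nat 3%nat) (c 1%nat 3%nat) (c 2%nat 2%nat) (c 2%nat 3%nat) (c 3%nat 2%nat) = 0)
      by (rewrite <- (Rminus_diag_eq _ _ O3); unfold P3; field).
    assert (H4 : P4 (c 3%nat 1%nat) (c 3%nat 3%nat) (c 1%nat 3%nat) (c 2%nat 2%nat) (c 2%nat 3%nat) (c 3%nat 2%nat) = 0)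
      by (rewrite <- (Rminus_diag_eq _ _ O4); unfold P4; field).
    destruct (fwd_core _ _ _ _ _ _ H1 H2 H3 H4) as (mu & sigma & Hmu & Hs & HT).
    exists (c 3%nat 2%nat), (c 3%nat 3%nat), mu, sigma.
    exact (conj eq_refl (conj eq_refl (conj Hmu (conj Hs (conj HT Rem))))).
  - intros (p & q & mu & sigma & Hp & Hq & Hmu & Hs & HT & Rem).
    subst p q.
    destruct (bwd_core (c 3%nat 1%nat) (c 3%nat 3%nat) (c 1%nat 3%nat) (c 2%nat 2%nat)
                (c 2%nat 3%nat) (c 3%nat 2%nat) mu sigma Hmu Hs HT) as (H1&H2&H3&H4).
    destruct Rem as (h00&h01&h02&h03&h10&h11&h12&h20&h21&h30).
    unfold system, sum44; simpl.
    rewrite ?h00, ?h01, ?h02, ?h03, ?h10, ?h11, ?h12, ?h20, ?h21, ?h30.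
    unfold P1, P2, P3, P4 in H1, H2, H3, H4.
    repeat split; lra.
Qed.
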